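(* Let $k_1,k_2$ be positive integers with $k_1\le k_2$ and $k_1+k_2\ge 4$, and let $m$ be a positive integer such that there exists a perfect $B[-k_1,k_2](m)$ set. Suppose $p$ is a prime and $a>0$ an integer with $p\mid m$ and $a\mid p-1$. If $p\mid a(k_1+k_2)+1$ and $\lfloor k_1/p\rfloor+\lfloor k_2/p\rfloor=\lfloor (k_1+k_2)/p\rfloor$, then $a(k_1+k_2)+1\mid m$.
   Context: For a positive integer $q$, $\mathbb{Z}_q$ is the ring of integers modulo $q$. For integers $a\le b$, $[a,b]^\ast=\{a,a+1,\dots,b\}\setminus\{0\}$. For non-negative integers $0\le k_1\le k_2$ and a positive integer $q$, a set $B\subseteq\mathbb{Z}_q$ is a $B[-k_1,k_2](q)$ set (splitter set) if, for each $b\in B$, the set $\{ab \bmod q: a\in[-k_1,k_2]^\ast\}$ consists of $k_1+k_2$ distinct nonzero elements, and these sets are pairwise disjoint for distinct $b\in B$. Such a set is perfect if $|B|=(q-1)/(k_1+k_2)$; equivalently, every nonzero element of $\mathbb{Z}_q$ has a unique representation $ab$ with $a\in[-k_1,k_2]^\ast$, $b\in B$ (and $0$ has no such representation). *)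

(* Defs.v *)
From mathcomp Require Import all_boot all_order all_algebra.
Set Implicit Arguments. Unset Strict Implicit. Unset Printing Implicit Defensive.
Import GRing.Theory Num.Theory.
Local Open Scope ring_scope.

Definition coefs (k1 k2 : nat) : seq int :=
  [seq x <- [seq (i%:Z - k1%:Z) | i <- iota 0 (k1 + k2).+1] | x != 0].

Definition mulmod (q : nat) (a : int) (b : nat) : int := ((a * b%:Z) %% q%:Z)%Z.

Definition mult_set (k1 k2 q : nat) (b : nat) : seq int :=
  [seq mulmod q a b | a <- coefs k1 k2].

Definition splitter_set (k1 k2 q : nat) (B : seq nat) : Prop :=
  [/\ uniq B, all (fun b => (b < q)%N) B,
      (forall b, b \in B ->
         uniq (mult_set k1 k2 q b) /\ 0 \notin mult_set k1 k2 q b)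
    & (forall b b', b \in B -> b' \in B -> b != b' ->
         forall x, x \in mult_set k1 k2 q b -> x \notin mult_set k1 k2 q b')].

(* perfect: |B| = (q-1)/(k1+k2), i.e. |B| (k1+k2) = q - 1 *)
Definition perfect_splitter_set (k1 k2 q : nat) (B : seq nat) : Prop :=
  splitter_set k1 k2 q B /\ (size B * (k1 + k2) = q.-1)%N.

(* Main.v *)
Require Import Defs.
From mathcomp Require Import all_boot all_order all_algebra.
From mathcomp Require Import zify.
Import GRing.Theory Num.Theory.

Lemma count_dvd_iota p k : (0 < p)%N -> count (fun i => p %| i)%N (iota 1 k) = (k %/ p)%N.
Proof.
move=> p0; elim: k => [|k IH]; first by rewrite div0n.
by rewrite -[k.+1]addn1 iotaD count_cat IH /= addn0 add1n addn1 (divnS _ p0) addnC.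
Qed.

Lemma count_ndvd_iota p k : (0 < p)%N ->
  count (fun i => ~~ (p %| i))%N (iota 1 k) = (k - k %/ p)%N.
Proof.
move=> p0; have H := count_predC (fun i => p %| i)%N (iota 1 k).
rewrite count_dvd_iota // size_iota in H.
change (count (predC (fun i => p %| i)%N) (iota 1 k) = k - k %/ p)%N; lia.
Qed.

Lemma count_neg_part (P : pred int) k :
  count (fun i : nat => P (i%:Z - k%:Z)%R) (iota 0 k) =
  count (fun j : nat => P (- j%:Z)%R) (iota 1 k).
Proof.
elim: k => [|k IH] //.
have -> : iota 1 k.+1 = iota 1 k ++ [:: k.+1] by rewrite -[k.+1]addn1 iotaD add1n addn1.
rewrite count_cat -IH /=.
have -> : iota 1 k = [seq 1 + i | i <- iota 0 k]%N by rewrite -iotaDl.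
rewrite count_map addn0 addnC; congr (_ + _)%N.
  by apply: eq_count => i /=; congr (P _); lia.
by congr (nat_of_bool (P _)); lia.
Qed.

Lemma count_coefs (P : pred int) k1 k2 : P 0%R = false ->
  count P (coefs k1 k2) = (count (fun j : nat => P (- j%:Z)%R) (iota 1 k1)
                           + count (fun j : nat => P (Posz j)) (iota 1 k2))%N.
Proof.
move=> P0; rewrite /coefs count_filter.
rewrite (@eq_count _ _ P); last first.
  by move=> x /=; case: eqP => [->|]; rewrite ?P0 ?andbF ?andbT.
rewrite count_map -addnS iotaD count_cat add0n.
congr (_ + _)%N; first by rewrite -count_neg_part.
have -> : iota k1 k2.+1 = [seq k1 + i | i <- iota 0 k2.+1]%N by rewrite -iotaDl addn0.
rewrite count_map /=.
have -> : (Posz (k1 + 0) - Posz k1)%R = 0%R by lia.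
rewrite P0 add0n.
have -> : iota 1 k2 = [seq 1 + i | i <- iota 0 k2]%N by rewrite -iotaDl.
rewrite !count_map; apply: eq_count => i /=; congr (P _); lia.
Qed.

Lemma size_coefs k1 k2 : size (coefs k1 k2) = (k1 + k2)%N.
Proof.
have : all (fun x => x != 0%R) (coefs k1 k2) by rewrite /coefs filter_all.
rewrite all_count => /eqP <-.
rewrite count_coefs //.
rewrite (@eq_in_count _ _ predT); last first.
  by move=> j; rewrite mem_iota /= => /andP [h _]; rewrite oppr_eq0; lia.
rewrite [count _ (iota 1 k2)](@eq_in_count _ _ predT); last first.
  by move=> j; rewrite mem_iota /= => /andP [h _]; lia.
by rewrite !count_predT !size_iota.
Qed.

Lemma uniq_flatten_disj (f : nat -> seq int) (B : seq nat) :
  uniq B -> (forall b, b \in B -> uniq (f b)) ->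
  (forall b b', b \in B -> b' \in B -> b != b' -> forall x, x \in f b -> x \notin f b') ->
  uniq (flatten [seq f b | b <- B]).
Proof.
elim: B => [|b B IH] //= /andP [bB uB] Hu Hd.
rewrite cat_uniq Hu ?mem_head // IH //; last first.
  - by move=> c c' hc hc'; apply: Hd; rewrite inE ?hc ?hc' orbT.
  - by move=> c hc; apply: Hu; rewrite inE hc orbT.
rewrite andbT; apply/hasPn => x /flattenP [s /mapP [c hc ->]] hx.
apply/negP => hxb.
have hbc : b != c by apply/eqP => E; rewrite E hc in bB.
have hc' : c \in b :: B by rewrite inE hc orbT.
by move: (Hd b c (mem_head _ _) hc' hbc x hxb); rewrite hx.
Qed.

Lemma sumn_const (T : Type) (s : seq T) c : sumn [seq c | x <- s] = (c * size s)%N.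
Proof. by elim: s => [|x s IH] /=; [rewrite muln0 | rewrite IH mulnS]. Qed.

Lemma sumn_ite (s : seq nat) (P : pred nat) c :
  sumn [seq (if P b then c else 0%N) | b <- s] = (c * count P s)%N.
Proof.
elim: s => [|x s IH] /=; first by rewrite muln0.
by rewrite IH mulnDr; case: (P x) => /=; rewrite ?muln1 ?muln0.
Qed.

Lemma dvd_modz p m x : (p %| m)%N -> (p%:Z %| (x %% m%:Z))%Z = (p%:Z %| x)%Z.
Proof.
move=> pm.
have h : (p%:Z %| ((x %/ m%:Z)%Z * m%:Z)%R)%Z.
  by apply: dvdz_mull; rewrite dvdzE !absz_nat.
have E2 : ((x %% m%:Z)%Z = x - (x %/ m%:Z)%Z * m%:Z)%R.
  by rewrite [X in (X - _)%R](divz_eq x m%:Z) addrAC subrr add0r.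
apply/idP/idP => H.
  by rewrite (divz_eq x m%:Z); apply: rpredD.
by rewrite E2; apply: rpredB.
Qed.

Lemma key p a n : prime p -> (0 < a)%N -> (a %| p.-1)%N -> (p %| a * n + 1)%N ->
  n %% p = p.-1 %/ a.
Proof.
move=> pp a0 ap pn.
have p1 := prime_gt1 pp.
set c := p.-1 %/ a.
have hc : p.-1 = (c * a)%N by rewrite divnK.
have hp : p = (a * c + 1)%N by lia.
set r := n %% p.
have rp : r < p by rewrite ltn_pmod //; lia.
have H1 : (p %| a * r + 1)%N.
  move: pn; rewrite {1}(divn_eq n p) mulnDr -addnA dvdn_addr //.
  by rewrite mulnA dvdn_mull.
have al : (a <= p.-1)%N by apply: dvdn_leq => //; lia.
case: (leqP c r) => h.
- have : (p %| a * (r - c))%N.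
    have E : (a * r + 1 = a * (r - c) + p)%N by rewrite hp mulnBr; have := leq_mul (leqnn a) h; lia.
    by move: H1; rewrite E dvdn_addl.
  rewrite Euclid_dvdM // => /orP [/(dvdn_leq a0) | ]; first lia.
  case: (posnP (r - c)) => [| rc /(dvdn_leq rc)]; lia.
- have : (p %| a * (c - r))%N.
    have E : (p = a * (c - r) + (a * r + 1))%N by rewrite {1}hp mulnBr; have := leq_mul (leqnn a) (ltnW h); lia.
    by move: (dvdnn p); rewrite {2}E dvdn_addl.
  rewrite Euclid_dvdM // => /orP [/(dvdn_leq a0) | ]; first lia.
  have hca := leq_pmulr c a0; case: (posnP (c - r)) => [| rc /(dvdn_leq rc)]; lia.
Qed.

Lemma arith1 t c a d m : t = (1 + d)%N -> (t * (c*a+1) = m)%N -> (m.-1 - d = t*(c*a))%N.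
Proof. move=> -> <-. rewrite mulnDr muln1. lia. Qed.
Lemma arith2 q c a : ((q * (c*a+1) + c) - q = c*(a*q+1))%N.
Proof. nia. Qed.
Lemma arith4 q c a : (a*(q*(c*a+1)+c)+1 = (c*a+1)*(a*q+1))%N.
Proof. nia. Qed.
Lemma arith5 t a p Bc q : (t * a = (a * q + 1) * Bc -> a * (t * p) = p * (a * q + 1) * Bc)%N.
Proof. by move=> h; rewrite mulnA (mulnC a) h mulnC mulnA. Qed.

Lemma hp_lem p c a : (1 < p)%N -> p.-1 = (c * a)%N -> p = (c * a + 1)%N.
Proof. move=> h1 h2; rewrite -h2 addn1 prednK //; lia. Qed.
Lemma c0_lem p c a : (1 < p)%N -> p.-1 = (c * a)%N -> (0 < c)%N.
Proof. move=> h1 h2; rewrite lt0n; apply/eqP => E; move: h2; rewrite E mul0n; lia. Qed.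
Lemma sub_lem k1 k2 x y q : (x <= k1)%N -> (y <= k2)%N -> (x + y = q)%N ->
  (k1 - x + (k2 - y) = k1 + k2 - q)%N.
Proof. lia. Qed.

Theorem corollary3p5 (k1 k2 m p a : nat) :
  (0 < k1)%N -> (k1 <= k2)%N -> (4 <= k1 + k2)%N -> (0 < m)%N ->
  (exists B : seq nat, perfect_splitter_set k1 k2 m B) ->
  prime p -> (0 < a)%N -> (p %| m)%N -> (a %| p.-1)%N ->
  (p %| a * (k1 + k2) + 1)%N ->
  (k1 %/ p + k2 %/ p = (k1 + k2) %/ p)%N ->
  (a * (k1 + k2) + 1 %| m)%N.
Proof.
move=> k10 k12 k4 m0 [B [[uB allB msB disjB] sizeB]] pp a0 pm ap pn hfl.
have p0 : (0 < p)%N by exact: prime_gt0.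
set n := (k1 + k2)%N in sizeB pn hfl *.
set L := flatten [seq mult_set k1 k2 m b | b <- B].
set T := [seq Posz i | i <- iota 1 m.-1].
have uL : uniq L by apply: uniq_flatten_disj => // b hb; case: (msB b hb).
have sL : size L = m.-1.
  rewrite size_flatten /shape -map_comp.
  rewrite (@eq_map _ _ _ (fun _ => n)); last by move=> b /=; rewrite size_map size_coefs.
  by rewrite sumn_const mulnC.
have subLT : {subset L <= T}.
  move=> x /flattenP [s /mapP [b hb ->]] hx.
  have [_ x0] := msB b hb.
  have xn0 : x != 0%R by apply/eqP => E; move: x0; rewrite -E hx.
  move: hx => /mapP [a' _ Ex].
  have xge : (0 <= x)%R by rewrite Ex /mulmod modz_ge0 //; lia.
  have xlt : (x < m%:Z)%R by rewrite Ex /mulmod ltz_pmod //; lia.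
  apply/mapP; exists `|x|%N; last by lia.
  rewrite mem_iota; lia.
have uT : uniq T by rewrite map_inj_uniq ?iota_uniq // => i j [].
have szT : size T = m.-1 by rewrite size_map size_iota.
have le1 : (size T <= size L)%N by rewrite szT sL.
have [_ eqLT] := uniq_min_size uL subLT le1.
have pLT : perm_eq L T by apply: uniq_perm.
pose P := fun x : int => ~~ (p%:Z %| x)%Z.
have cT : count P T = (m.-1 - m.-1 %/ p)%N.
  rewrite count_map -(@count_ndvd_iota p m.-1 p0); apply: eq_count => i /=.
  by rewrite /P dvdzE !absz_nat.
have cA : count P (coefs k1 k2) = (k1 - k1 %/ p + (k2 - k2 %/ p))%N.
  rewrite count_coefs; last by rewrite /P dvdz0.
  rewrite -!count_ndvd_iota //; congr (_ + _)%N; apply: eq_count => j /=;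
  by rewrite /P dvdzE ?abszN !absz_nat.
have cL : count P L = (count P (coefs k1 k2) * count (fun b => ~~ (p %| b)) B)%N.
  rewrite count_flatten -map_comp -sumn_ite.
  congr sumn; apply: eq_map => b /=.
  rewrite /mult_set count_map.
  have Hb : forall a', (preim (fun a => mulmod m a b) P) a' = P a' && ~~ (p %| b).
    move=> a' /=; rewrite /P /mulmod dvd_modz // dvdzE abszM !absz_nat Euclid_dvdM //.
    by rewrite negb_or.
  rewrite (eq_count Hb); case: (p %| b) => /=.
    by rewrite (@eq_count _ _ pred0) ?count_pred0 // => a'; rewrite andbF.
  by apply: eq_count => a'; rewrite andbT.
set Bc := count (fun b => ~~ (p %| b)) B in cL.
have HX : (m.-1 - m.-1 %/ p = (k1 - k1 %/ p + (k2 - k2 %/ p)) * Bc)%N.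
  by rewrite -cT -(permP pLT P) cL cA.
have hr := @key p a n pp a0 ap pn.
set c := p.-1 %/ a in hr.
have hc : p.-1 = (c * a)%N by rewrite divnK.
have dn := divn_eq n p.
have dm := divnS m.-1 p0.
rewrite prednK // pm in dm.
have hm := divnK pm.
have l1 := leq_div k1 p.
have l2 := leq_div k2 p.
have ld := leq_div m.-1 p.
set q := n %/ p in dn hfl.
set t := m %/ p in dm hm.
set d := m.-1 %/ p in dm HX ld.
have p1 := prime_gt1 pp.
have hp : p = (c * a + 1)%N by apply: hp_lem.
have c0 : (0 < c)%N by apply: (@c0_lem p c a p1 hc).
have hn : n = (k1 + k2)%N by [].
have E1 : (m.-1 - d = t * (c * a))%N.
  by apply: arith1 => //; rewrite -hp.
have E2 : (k1 - k1 %/ p + (k2 - k2 %/ p) = c * (a * q + 1))%N.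
  rewrite -(arith2 q c a) -hp -hr -dn hn; exact: sub_lem.
have E3 : (t * a = (a * q + 1) * Bc)%N.
  move: HX; rewrite E1 E2 => HX.
  apply/eqP; rewrite -(eqn_pmul2l c0); apply/eqP.
  by rewrite mulnA (mulnC c t) -mulnA HX -mulnA.
have E4 : (a * n + 1 = p * (a * q + 1))%N.
  by rewrite {1}dn hr hp arith4.
have Hma : (a * m = (a * n + 1) * Bc)%N.
  by rewrite -hm E4; apply: arith5.
have : (a * n + 1 %| a * m)%N by rewrite Hma dvdn_mulr.
rewrite Gauss_dvdr //.
by rewrite /coprime gcdnC [(a * n)%N]mulnC gcdnMDl gcdn1.
Qed.
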